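(* Let $X$ and $Y$ be real Banach spaces and let $Z$ be a metric linear space (topological vector space) equipped with a translation-invariant metric $d_Z$. Suppose $X$ and $Y$ are linearly and isometrically embedded into $Z$ (so $d_Z(x_1,x_2)=\|x_1-x_2\|_X$ on $X$ and similarly on $Y$). Then $d_K(X,Y)\le d_Z(B_X,B_Y)$, where $d_Z(B_X,B_Y)$ is the Hausdorff distance in $(Z,d_Z)$ between the closed unit balls.
   Context: The Kadets distance $d_K(X,Y)$ is the infimum, over all Banach spaces $W$ and linear isometric embeddings $U:X\to W$, $V:Y\to W$, of the Hausdorff distance in $W$ between $UB_X$ and $VB_Y$. *)

(* Defs.v *)
From HB Require Import structures.
From mathcomp Require Import all_boot all_order all_algebra.
From mathcomp Require Import all_classical all_reals all_analysis.
Set Implicit Arguments. Unset Strict Implicit. Unset Printing Implicit Defensive.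
Import Order.TTheory GRing.Theory Num.Theory.
Import numFieldNormedType.Exports.
Local Open Scope classical_set_scope.
Local Open Scope ring_scope.

Definition unit_ball (R : realType) (X : normedModType R) : set X :=
  [set x | `|x| <= 1].
Arguments unit_ball {R} X.

Definition hausdorff (R : realType) (T : Type) (d : T -> T -> R)
    (A B : set T) : \bar R :=
  maxe (ereal_sup [set ereal_inf [set (d a b)%:E | b in B] | a in A])
       (ereal_sup [set ereal_inf [set (d a b)%:E | a in A] | b in B]).

Definition lin_isometry (R : realType) (X W : normedModType R) (U : X -> W) :=
  (forall (a : R) (x y : X), U (a *: x + y) = a *: U x + U y) /\
  (forall x : X, `|U x| = `|x|).

Definition kadets_dist (R : realType) (X Y : completeNormedModType R) : \bar R :=
  ereal_inf [set h | exists (W : completeNormedModType R) (U : X -> W) (V : Y -> W),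
     lin_isometry U /\ lin_isometry V /\
     h = hausdorff (fun w1 w2 : W => `|w1 - w2|) (U @` unit_ball X) (V @` unit_ball Y)].

(* A metric linear space: a real vector space Z with a metric d that is
   translation invariant and for which scalar multiplication R x Z -> Z is
   (jointly) continuous (addition is then automatically continuous). *)
Definition metric_linear_space (R : realType) (Z : lmodType R) (d : Z -> Z -> R) :=
  [/\ (forall x y, d x y = 0 <-> x = y),
      (forall x y, d x y = d y x),
      (forall x y z, d x z <= d x y + d y z),
      (forall x y z, d (x + z) (y + z) = d x y) &
      (forall (a : R) (x : Z) (eps : R), 0 < eps ->
         exists2 delta : R, 0 < delta &
           forall (b : R) (y : Z), `|b - a| < delta -> d y x < delta ->
             d (b *: y) (a *: x) < eps)].

Definition lin_isometric_into (R : realType) (X : normedModType R) (Z : lmodType R)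
    (d : Z -> Z -> R) (J : X -> Z) :=
  (forall (a : R) (x y : X), J (a *: x + y) = a *: J x + J y) /\
  (forall x1 x2 : X, d (J x1) (J x2) = `|x1 - x2|).

(* Main.v *)
Require Import Defs.
From HB Require Import structures.
From mathcomp Require Import all_boot all_order all_algebra.
From mathcomp Require Import all_classical all_reals all_analysis.
From mathcomp Require Import lra.
Import Order.TTheory GRing.Theory Num.Theory.
Local Open Scope classical_set_scope.
Local Open Scope ring_scope.

Section Homog.
Variables (R : realType) (V : lmodType R) (f : V -> R) (M : V -> R).
Hypotheses (fD : forall u w, f (u + w) <= f u + f w) (fN : forall u, f (- u) = f u)
  (f_ge0 : forall u, 0 <= f u) (fZ : forall r u, f (r *: u) <= `|r| * M u).

Definition hS v := [set f (t *: v) / t | t in [set t : R | 0 < t]].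
Definition hp v := inf (hS v).

Lemma hS_has_inf v : has_inf (hS v).
Proof.
split; first by exists (f (1 *: v) / 1); exists 1 => //=; rewrite ltr01.
exists 0 => _ [t /= t0 <-]; exact: divr_ge0 (f_ge0 _) (ltW t0).
Qed.

Lemma hp_le v t : 0 < t -> hp v <= f (t *: v) / t.
Proof. move=> t0; apply: ge_inf; first by case: (hS_has_inf v). by exists t. Qed.

Lemma hp_ge v x : (forall t, 0 < t -> x <= f (t *: v) / t) -> x <= hp v.
Proof.
move=> H; apply: lb_le_inf; first by case: (hS_has_inf v).
by move=> _ [t /= t0 <-]; exact: H.
Qed.

Lemma hp_ge0 v : 0 <= hp v.
Proof. by apply: hp_ge => t t0; exact: divr_ge0 (f_ge0 _) (ltW t0). Qed.

Lemma hp_adh v e : 0 < e -> exists2 t, 0 < t & f (t *: v) / t < hp v + e.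
Proof.
move=> e0; have [_ [t /= t0 <-] H] := inf_adherent e0 (hS_has_inf v).
by exists t.
Qed.

Lemma hp_le_f v : hp v <= f v.
Proof. by have := @hp_le v 1 ltr01; rewrite scale1r divr1. Qed.

Lemma M_ge0 v : 0 <= M v.
Proof. by have := fZ 1 v; rewrite normr1 mul1r scale1r; apply: le_trans. Qed.

Lemma f0 : f 0 = 0.
Proof.
apply/eqP; rewrite eq_le f_ge0 andbT.
by have := fZ 0 0; rewrite scale0r normr0 mul0r.
Qed.

Lemma fnat n u : f (n%:R *: u) <= n%:R * f u.
Proof.
elim: n => [|n IH]; first by rewrite scale0r mul0r f0.
rewrite -addn1 natrD scalerDl mulrDl scale1r mul1r.
by apply: le_trans (fD _ _) _; rewrite lerD2r.
Qed.

Lemma hp_eventually v e : 0 < e ->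
  exists2 T, 0 < T & forall t, T <= t -> f (t *: v) / t <= hp v + e.
Proof.
move=> e0.
have e20 : 0 < e / 2 by rewrite divr_gt0.
have [s s0 Hs] := @hp_adh v (e / 2) e20.
have M0 := M_ge0 v.
exists (s + 2 * s * M v / e + 1).
  by rewrite ltr_wpDl ?ltr01 // addr_ge0 ?(ltW s0) // divr_ge0 ?(ltW e0) // mulr_ge0 // mulr_ge0 // ltW.
move=> t Tt.
have t0 : 0 < t.
  apply: lt_le_trans Tt. 
  by rewrite ltr_wpDl ?ltr01 // addr_ge0 ?(ltW s0) // divr_ge0 ?(ltW e0) // mulr_ge0 // mulr_ge0 // ltW.
set n := Num.truncn (t / s).
have /andP[nle nlt] := truncn_itv (divr_ge0 (ltW t0) (ltW s0)).
rewrite -/n in nle nlt.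
set r := t - n%:R * s.
have r0 : 0 <= r by rewrite subr_ge0 -ler_pdivlMr.
have rs : r <= s.
  rewrite /r lerBlDl -[X in _ + X]mul1r -mulrDl. 
  by rewrite -ler_pdivrMr // natr1 ltW. 
have tE : t *: v = n%:R *: (s *: v) + r *: v.
  by rewrite scalerA -scalerDl /r addrC subrK.
have Hf : f (t *: v) <= n%:R * f (s *: v) + r * M v.
  rewrite tE; apply: le_trans (fD _ _) _; apply: lerD; first exact: fnat.
  by have := fZ r v; rewrite ger0_norm.
have Hs' : f (s *: v) <= (hp v + e / 2) * s by rewrite -ler_pdivrMr // ltW.
have hp0 := hp_ge0 v.
have ns : n%:R * s <= t by rewrite -ler_pdivlMr.
have sMv : s * M v <= t * (e / 2).
  have H' : 2 * s * M v / e <= t.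
    apply: le_trans Tt; rewrite [s + _]addrC -addrA lerDl addr_ge0 // ltW //.
  have H : 2 * s * M v <= t * e by move: H'; rewrite (@ler_pdivrMr _ e).
  lra.
rewrite ler_pdivrMr //.
apply: le_trans Hf _.
have h1 : n%:R * f (s *: v) <= (hp v + e / 2) * t.
  apply: le_trans (ler_wpM2l (ler0n _ _) Hs') _.
  rewrite mulrCA ler_wpM2l // addr_ge0 // ltW //.
have h2 : r * M v <= t * (e / 2).
  apply: le_trans sMv; exact: ler_wpM2r.
have := lerD h1 h2.
move=> H; apply: le_trans H _.
rewrite mulrDl mulrDl [t * _]mulrC -addrA lerD2l.
by rewrite -mulrDl -splitr.
Qed.

Lemma hpD v w : hp (v + w) <= hp v + hp w.
Proof.
apply/ler_addgt0Pr => e e0.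
have e20 : 0 < e / 2 by rewrite divr_gt0.
have [T1 T10 H1] := @hp_eventually v (e / 2) e20.
have [T2 T20 H2] := @hp_eventually w (e / 2) e20.
set t := T1 + T2.
have t0 : 0 < t by rewrite addr_gt0.
apply: le_trans (@hp_le (v + w) t t0) _.
rewrite scalerDr.
apply: le_trans (_ : (f (t *: v) + f (t *: w)) / t <= _).
  by rewrite ler_pM2r ?invr_gt0 // fD.
rewrite mulrDl.
have := H1 t; have := H2 t.
rewrite /t ?lerDl ?lerDr => h2 h1; have {h1}h1 := h1 (ltW T20); have {h2}h2 := h2 (ltW T10).
have := lerD h1 h2.
by rewrite addrACA -splitr.
Qed.

Lemma hp0 : hp 0 = 0.
Proof.
apply/eqP; rewrite eq_le hp_ge0 andbT.
by apply: le_trans (hp_le_f 0) _; rewrite f0.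
Qed.

Lemma hpZ_le l v : l != 0 -> hp (l *: v) <= `|l| * hp v.
Proof.
move=> l0; have nl0 : 0 < `|l| by rewrite normr_gt0.
rewrite mulrC -ler_pdivrMr //.
apply: hp_ge => t t0.
have tl0 : 0 < t / `|l| by rewrite divr_gt0.
rewrite ler_pdivrMr //.
apply: le_trans (@hp_le (l *: v) (t / `|l|) tl0) _.
rewrite scalerA invf_div mulrA.
have -> : f ((t / `|l|) * l *: v) = f (t *: v).
  case: (ltrgt0P l) l0 => // hl _.
    by rewrite divfK // gt_eqF.
  rewrite invrN mulrN mulNr divfK ?lt_eqF // scaleNr fN //.
by rewrite mulrAC.
Qed.

Lemma hpZ l v : hp (l *: v) = `|l| * hp v.
Proof.
have [->|l0] := eqVneq l 0; first by rewrite scale0r hp0 normr0 mul0r.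
apply/eqP; rewrite eq_le hpZ_le //=.
have il0 : l^-1 != 0 by rewrite invr_eq0.
have := @hpZ_le (l^-1) (l *: v) il0; rewrite scalerA mulVf // scale1r.
rewrite normfV => H.
by rewrite -ler_pdivlMl ?normr_gt0.
Qed.
End Homog.

Section Conc.
Variables (R : realType) (X Y : completeNormedModType R) (Z : lmodType R)
  (d : Z -> Z -> R) (JX : X -> Z) (JY : Y -> Z).
Variables (Hd : metric_linear_space d) (HX : lin_isometric_into d JX)
  (HY : lin_isometric_into d JY).

Let dsym : forall x y, d x y = d y x. Proof. by case: Hd. Qed.
Let dtri : forall x y z, d x z <= d x y + d y z. Proof. by case: Hd. Qed.
Let dT : forall x y z, d (x + z) (y + z) = d x y. Proof. by case: Hd. Qed.
Let dxx : forall x, d x x = 0. Proof. by case: Hd => H *; apply/H. Qed.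

Lemma g_add u w : d (u + w) 0 <= d u 0 + d w 0.
Proof.
apply: le_trans (dtri (u + w) w 0) _.
by rewrite -{2}[w]add0r dT.
Qed.

Lemma g_opp u : d (- u) 0 = d u 0.
Proof. by rewrite -(dT (- u) 0 u) addNr add0r dsym. Qed.

Lemma g_ge0 u : 0 <= d u 0.
Proof.
have := dtri u 0 u; rewrite dxx dsym -mulr2n.
move=> H; lra.
Qed.

Lemma J_lin {T : normedModType R} {J : T -> Z} : lin_isometric_into d J ->
  [/\ J 0 = 0, forall x y, J (x + y) = J x + J y, forall a x, J (a *: x) = a *: J x
   & forall x, d (J x) 0 = `|x|].
Proof.
case=> Hl Hi.
have J0 : J 0 = 0.
  have := Hl 1 0 0; rewrite scale1r addr0 => /(congr1 (fun z => z - J 0)).  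
  by rewrite subrr addrK scale1r => /esym.
have JD x y : J (x + y) = J x + J y by have := Hl 1 x y; rewrite !scale1r.
split => //.
- by move=> a x; rewrite -[a *: x]addr0 Hl J0 addr0.
- by move=> x; rewrite -J0 Hi subr0.
Qed.

Definition fXY (v : X * Y) := d (JX v.1 + JY v.2) 0.
Definition MXY (v : X * Y) := `|v.1| + `|v.2|.

Lemma fXY_D u w : fXY (u + w) <= fXY u + fXY w.
Proof.
have [_ JXD _ _] := J_lin HX; have [_ JYD _ _] := J_lin HY.
by rewrite /fXY /= JXD JYD addrACA g_add.
Qed.

Lemma fXY_N u : fXY (- u) = fXY u.
Proof.
have [_ _ JXZ _] := J_lin HX; have [_ _ JYZ _] := J_lin HY.
rewrite /fXY /= -scaleN1r JXZ -[- u.2]scaleN1r JYZ -scalerDr scaleN1r.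
exact: g_opp.
Qed.

Lemma fXY_ge0 u : 0 <= fXY u. Proof. exact: g_ge0. Qed.

Lemma fXY_Z r u : fXY (r *: u) <= `|r| * MXY u.
Proof.
have [_ _ JXZ JXn] := J_lin HX; have [_ _ JYZ JYn] := J_lin HY.
rewrite /fXY /MXY /=; apply: le_trans (g_add _ _) _.
by rewrite !JXn !JYn !normrZ mulrDr.
Qed.

Definition pXY := @hp _ _ fXY.

Lemma pXY_x0 x : pXY (x, 0) = `|x|.
Proof.
have [_ _ _ JXn] := J_lin HX; have [JY0 _ _ _] := J_lin HY.
apply/eqP; rewrite eq_le; apply/andP; split.
  by apply: le_trans (@hp_le_f _ _ fXY fXY_ge0 _) _; rewrite /fXY /= JY0 addr0 JXn.
apply: (@hp_ge _ _ fXY fXY_ge0) => t t0.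
rewrite /fXY /= scaler0 JY0 addr0 JXn normrZ gtr0_norm //.
by rewrite [t * _]mulrC mulfK ?gt_eqF.
Qed.

Lemma pXY_0y y : pXY (0, y) = `|y|.
Proof.
have [JX0 _ _ _] := J_lin HX; have [_ _ _ JYn] := J_lin HY.
apply/eqP; rewrite eq_le; apply/andP; split.
  by apply: le_trans (@hp_le_f _ _ fXY fXY_ge0 _) _; rewrite /fXY /= JX0 add0r JYn.
apply: (@hp_ge _ _ fXY fXY_ge0) => t t0.
rewrite /fXY /= scaler0 JX0 add0r JYn normrZ gtr0_norm //.
by rewrite [t * _]mulrC mulfK ?gt_eqF.
Qed.

Lemma pXY_ab a b : pXY (a, - b) <= d (JX a) (JY b).
Proof.
have [_ _ JYZ _] := J_lin HY.
apply: le_trans (@hp_le_f _ _ fXY fXY_ge0 _) _.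
rewrite /fXY /= -scaleN1r JYZ scaleN1r.
by rewrite -(dT _ _ (JY b)) subrK add0r.
Qed.

Lemma pXY_D u w : pXY (u + w) <= pXY u + pXY w.
Proof. exact: (@hpD _ _ fXY MXY fXY_D fXY_ge0 fXY_Z). Qed.

Lemma pXY_Z l u : pXY (l *: u) = `|l| * pXY u.
Proof. exact: (@hpZ _ _ fXY MXY fXY_N fXY_ge0 fXY_Z). Qed.

Lemma pXY_ge0 u : 0 <= pXY u.
Proof. exact: (@hp_ge0 _ _ fXY fXY_ge0). Qed.

Lemma pXY_le u : pXY u <= `|u.1| + `|u.2|.
Proof. apply: le_trans (@hp_le_f _ _ fXY fXY_ge0 _) _; have := fXY_Z 1 u; by rewrite normr1 mul1r scale1r. Qed.
Variable eps : {posnum R}.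
Definition Wt : Type := (fun _ _ _ _ => (X * Y)%type) Hd HX HY eps.
HB.instance Definition _ := GRing.Lmodule.copy Wt (X * Y)%type.

Definition delta := Num.min eps%:num 1.
Lemma delta_gt0 : 0 < delta. Proof. by rewrite /delta lt_min ltr01 andbT. Qed.
Lemma delta_le1 : delta <= 1. Proof. by rewrite /delta ge_min lexx orbT. Qed.

Lemma lmaxl (x y : R) : x <= Num.max x y. Proof. by rewrite le_max lexx. Qed.
Lemma lmaxr (x y : R) : y <= Num.max x y. Proof. by rewrite le_max lexx orbT. Qed.

Definition Nw (v : Wt) : R := Num.max (pXY v) (delta * Num.max `|v.1| `|v.2|).

Lemma Nw_D (v w : Wt) : Nw (v + w) <= Nw v + Nw w.
Proof.
rewrite /Nw ge_max; apply/andP; split.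
  apply: le_trans (pXY_D _ _) _; apply: lerD; exact: lmaxl.
apply: le_trans (_ : delta * Num.max `|v.1| `|v.2| + delta * Num.max `|w.1| `|w.2| <= _); last first.
  apply: lerD; exact: lmaxr.
rewrite -mulrDr ler_wpM2l ?(ltW delta_gt0) //.
rewrite ge_max; apply/andP; split.
  apply: le_trans (ler_normD _ _) _; apply: lerD; exact: lmaxl.
apply: le_trans (ler_normD _ _) _; apply: lerD; exact: lmaxr.
Qed.

Lemma Nw_Z (l : R) (v : Wt) : Nw (l *: v) = `|l| * Nw v.
Proof.
rewrite /Nw pXY_Z /= !normrZ -maxr_pMr // mulrCA -maxr_pMr //.
Qed.

Lemma Nw_eq0 (v : Wt) : Nw v = 0 -> v = 0.
Proof.
move=> H.
have : delta * Num.max `|v.1| `|v.2| <= 0 by rewrite -H lmaxr.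
rewrite pmulr_rle0 ?delta_gt0 // ge_max !normr_le0 => /andP[/eqP h1 /eqP h2].
by case: v h1 h2 {H} => a b /= -> ->.
Qed.

HB.instance Definition _ := Lmodule_isNormed.Build R Wt Nw_D Nw_Z Nw_eq0.

Lemma normWE (v : Wt) : `|v| = Nw v. Proof. by []. Qed.

Lemma Nw_fst (v : Wt) : delta * `|v.1| <= `|v|.
Proof.
rewrite normWE /Nw; apply: le_trans (lmaxr _ _).
by rewrite ler_wpM2l ?(ltW delta_gt0) ?lmaxl.
Qed.

Lemma Nw_snd (v : Wt) : delta * `|v.2| <= `|v|.
Proof.
rewrite normWE /Nw; apply: le_trans (lmaxr _ _).
by rewrite ler_wpM2l ?(ltW delta_gt0) ?lmaxr.
Qed.

Lemma Nw_le (v : Wt) : `|v| <= `|v.1| + `|v.2|.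
Proof.
rewrite normWE /Nw ge_max pXY_le /=.
apply: le_trans (_ : 1 * Num.max `|v.1| `|v.2| <= _).
  by rewrite ler_wpM2r ?delta_le1 // le_max normr_ge0.
rewrite mul1r ge_max; apply/andP; split.
  by rewrite lerDl normr_ge0.
by rewrite lerDr normr_ge0.
Qed.

Lemma Wcomplete (F : set_system Wt) : ProperFilter F -> cauchy F -> cvg F.
Proof.
move=> FF /cauchyP Fc.
have c1 : cauchy (fst @ F).
  apply/cauchy_exP => e e0.
  have [w Fw] := Fc (delta * e) (mulr_gt0 delta_gt0 e0).
  exists w.1; rewrite /= /nbhs /=.
  apply: filterS Fw => v; rewrite -!ball_normE /ball_ /= => H.
  have := le_lt_trans (Nw_fst (w - v)) H.
  by rewrite ltr_pM2l ?delta_gt0.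
have c2 : cauchy (snd @ F).
  apply/cauchy_exP => e e0.
  have [w Fw] := Fc (delta * e) (mulr_gt0 delta_gt0 e0).
  exists w.2; rewrite /= /nbhs /=.
  apply: filterS Fw => v; rewrite -!ball_normE /ball_ /= => H.
  have := le_lt_trans (Nw_snd (w - v)) H.
  by rewrite ltr_pM2l ?delta_gt0.
have /cauchy_cvgP cv1 := c1.
have /cauchy_cvgP cv2 := c2.
apply/cvg_ex; exists ((lim (fst @ F), lim (snd @ F)) : Wt).
apply/fcvgrPdist_lt => e e0.
have e20 : 0 < e / 2 by rewrite divr_gt0.
have /fcvgrPdist_lt h1 := cv1.
have /fcvgrPdist_lt h2 := cv2.
near=> v.
apply: le_lt_trans (Nw_le _) _.
rewrite [e]splitr; apply: ltrD.
  by near: v; exact: (h1 _ e20).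
by near: v; exact: (h2 _ e20).
Unshelve. all: by end_near.
Qed.

HB.instance Definition _ := Uniform_isComplete.Build Wt Wcomplete.
End Conc.

Lemma emaxl (R : realType) (x y : \bar R) : (x <= maxe x y)%E.
Proof. by rewrite le_max lexx. Qed.
Lemma emaxr (R : realType) (x y : \bar R) : (y <= maxe x y)%E.
Proof. by rewrite le_max lexx orbT. Qed.

Lemma inf_le_sup {R : realType} {T : Type} {D1 D2 : T -> R} {B : set T} {e : R} :
  (forall b, B b -> D1 b <= D2 b + e) ->
  (ereal_inf [set (D1 b)%:E | b in B] <= ereal_inf [set (D2 b)%:E | b in B] + e%:E)%E.
Proof.
move=> H; rewrite -leeBlDr //.
apply: le_ereal_inf_tmp => _ [b Bb <-].
rewrite leeBlDr //; apply: le_trans (ereal_inf_lbound _) _.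
  by exists b.
by rewrite -EFinD lee_fin H.
Qed.

Lemma haus_le (R : realType) (X Y T1 T2 : Type) (d1 : T1 -> T1 -> R) (d2 : T2 -> T2 -> R)
  (A : set X) (B : set Y) (u : X -> T1) (v : Y -> T1) (u' : X -> T2) (v' : Y -> T2) (e : R) :
  (forall a b, A a -> B b -> d1 (u a) (v b) <= d2 (u' a) (v' b) + e) ->
  (hausdorff d1 (u @` A) (v @` B) <= hausdorff d2 (u' @` A) (v' @` B) + e%:E)%E.
Proof.
move=> H; rewrite /hausdorff ge_max; apply/andP; split.
- apply: le_trans _ (leeD2r _ (emaxl _ _ _)).
  apply: ge_ereal_sup => _ [_ [a Aa <-] <-].
  have -> : [set (d1 (u a) b)%:E | b in v @` B] = [set (d1 (u a) (v b))%:E | b in B].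
    by rewrite image_comp.
  apply: le_trans (inf_le_sup (fun b => H a b Aa)) _.
  apply: leeD2r; apply: ereal_sup_ubound.
  exists (u' a); first by exists a.
  by rewrite image_comp.
- apply: le_trans _ (leeD2r _ (emaxr _ _ _)).
  apply: ge_ereal_sup => _ [_ [b Bb <-] <-].
  rewrite image_comp.
  apply: le_trans (inf_le_sup (fun a Aa => H a b Aa Bb)) _.
  apply: leeD2r; apply: ereal_sup_ubound.
  exists (v' b); first by exists b.
  by rewrite image_comp.
Qed.

Theorem theorem2p5 (R : realType) (X Y : completeNormedModType R)
    (Z : lmodType R) (d : Z -> Z -> R) (JX : X -> Z) (JY : Y -> Z) :
  metric_linear_space d ->
  lin_isometric_into d JX -> lin_isometric_into d JY ->
  (kadets_dist X Y <= hausdorff d (JX @` unit_ball X) (JY @` unit_ball Y))%E.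
Proof.
move=> Hd HX HY.
apply/lee_addgt0Pr => e e0.
pose eps : {posnum R} := PosNum e0.
pose W := @Wt R X Y Z d JX JY Hd HX HY eps.
pose U := fun x : X => ((x, 0) : W).
pose V := fun y : Y => ((0, y) : W).
have dl0 := @delta_gt0 R eps.
have dl1 := @delta_le1 R eps.
have dle : @delta R eps <= e by rewrite /delta ge_min lexx.
have isoU : lin_isometry U.
  split.
    move=> a x y; rewrite /U.
    apply/eqP; rewrite xpair_eqE /=; apply/andP; split; apply/eqP => //.
    by rewrite scaler0 addr0.
  move=> x; rewrite normWE /Nw /= (@pXY_x0 _ _ _ _ _ _ _ Hd HX HY) normr0.
  apply/eqP; rewrite eq_le ge_max lexx /= le_max lexx /= andbT.
  have -> : Num.max `|x| 0 = `|x| by apply/eqP; rewrite eq_le ge_max lexx normr_ge0 le_max lexx.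
  by rewrite ler_piMl.
have isoV : lin_isometry V.
  split.
    move=> a x y; rewrite /V.
    apply/eqP; rewrite xpair_eqE /=; apply/andP; split; apply/eqP => //.
    by rewrite scaler0 addr0.
  move=> y; rewrite normWE /Nw /= (@pXY_0y _ _ _ _ _ _ _ Hd HX HY) normr0.
  apply/eqP; rewrite eq_le ge_max lexx /= le_max lexx /= andbT.
  have -> : Num.max 0 `|y| = `|y| by apply/eqP; rewrite eq_le ge_max lexx normr_ge0 le_max lexx orbT.
  by rewrite ler_piMl.
apply: (@le_trans _ _ (hausdorff (fun w1 w2 : W => `|w1 - w2|) (U @` unit_ball X) (V @` unit_ball Y))).
  apply: ereal_inf_lbound; exists (W : completeNormedModType R), U, V; split => //.
apply: haus_le => a b Ha Hb.
rewrite normWE /Nw /=.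
have -> : (U a - V b) = ((a, - b) : W).
  by apply/eqP; rewrite xpair_eqE /= subr0 sub0r !eqxx.
rewrite subr0 sub0r normrN ge_max; apply/andP; split.
  apply: le_trans (@pXY_ab _ _ _ _ _ _ _ Hd HY a b) _.
  by rewrite lerDl ltW.
have d0 : 0 <= d (JX a) (JY b).
  have [H1 H2 H3 _ _] := Hd.
  have := H3 (JX a) (JY b) (JX a); rewrite (proj2 (H1 _ _) erefl).
  rewrite (H2 (JY b)) => H; lra.
apply: le_trans (_ : delta R eps * 1 <= _).
  rewrite ler_wpM2l ?(ltW dl0) // ge_max; exact/andP.
rewrite mulr1; apply: le_trans dle _; by rewrite lerDr.
Qed.
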